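(* Let $G$ be a finite group, $H$ a normal subgroup of $G$, and $K$ a subgroup of $G$ with either $H\cap K=\{1\}$ or $K\subseteq H$. Let $J=[HK:K]$ and let $\{t_1,\dots,t_J\}$ be a transversal for the left cosets of $K$ in $HK$. Let $\lambda:G\to\mathbb{Z}$ be defined by $\lambda(g)=J-1$ if $g\in K$, $\lambda(g)=-1$ if $g\in HK\setminus K$, and $\lambda(g)=0$ if $g\notin HK$. Then every subset of cardinality $J-1$ of the collection of functions $\{[t_j,\lambda]:j=1,\dots,J\}$ is linearly independent (over $\mathbb{Z}$).
   Context: $HK=\{hk:h\in H,k\in K\}$ is a subgroup since $H$ is normal. For $g\in G$ and a function $f:G\to\mathbb{Z}$, $[g,f]$ denotes the function $x\mapsto f(g^{-1}x)$. *)

(* Defs.v *)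
From HB Require Import structures.
From mathcomp Require Import all_boot all_order all_algebra all_fingroup.
Set Implicit Arguments. Unset Strict Implicit. Unset Printing Implicit Defensive.
Import GRing.Theory Num.Theory.

Definition lam (gT : finGroupType) (H K : {set gT}) (g : gT) : int :=
  if g \in K then (#|H * K : K|%g%:Z - 1)%R
  else if g \in (H * K)%g then (-1)%R else 0%R.

(* the left translate [t, f] : x |-> f (t^-1 x) *)
Definition ltrans (gT : finGroupType) (t : gT) (f : gT -> int) : gT -> int :=
  fun x => f (t^-1 * x)%g.

(* Main.v *)
Require Import Defs.
From HB Require Import structures.
From mathcomp Require Import all_boot all_order all_algebra all_fingroup.
From mathcomp Require Import ring.
Import GRing.Theory Num.Theory.

Theorem lemma3p2 (gT : finGroupType) (G H K : {group gT})
  (nHG : (H <| G)%g) (sKG : K \subset G)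
  (hHK : (H :&: K = 1)%g \/ K \subset H)
  (X : {set gT})
  (hX : is_transversal X (lcosets K (H * K))%g (H * K)%g)
  (S : {set gT}) (sSX : S \subset X) (cardS : #|S| = (#|H * K : K|%g - 1)%N)
  (c : gT -> int)
  (hc : forall x, x \in G -> (\sum_(t in S) c t * ltrans t (lam H K) x)%R = 0%R) :
  forall t, t \in S -> c t = 0%R.
Proof.
have nKH : K \subset 'N(H)%g := subset_trans sKG (normal_norm nHG).
have eHK : (H * K)%g = (H <*> K)%g by rewrite norm_joinEr.
have sXHK : X \subset (H * K)%g by case/and3P: hX.
have sHKG : (H * K)%g \subset G by rewrite mul_subG // normal_sub.
set J := #|H * K : K|%g.
have J0 : (0 < J)%N by rewrite /J eHK indexg_gt0.
have uniqX : forall s t, s \in X -> t \in X -> (s^-1 * t \in K)%g -> s = t.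
  move=> s t sX tX stK.
  have PB : (s *: K \in lcosets K (H * K))%g.
    by apply/imsetP; exists s; [exact: (subsetP sXHK) | rewrite lcosetE].
  have := setI_transversal_pblock hX s PB => eq1.
  have : s \in X :&: (s *: K)%g by rewrite inE sX lcoset_refl.
  have : t \in X :&: (s *: K)%g by rewrite inE tX mem_lcoset.
  by rewrite eq1 !inE => /eqP e1 /eqP e2; rewrite e1 -e2.
have lamE : forall s t, s \in S -> t \in S ->
    lam H K (s^-1 * t)%g = ((J%:Z * (s == t)%:Z) - 1)%R.
  move=> s t sS tS; rewrite /lam.
  have sX := subsetP sSX _ sS; have tX := subsetP sSX _ tS.
  case: eqP => [<-|nst]; first by rewrite mulVg group1 mulr1.
  have -> : (s^-1 * t \in K)%g = false.
    by apply/negP => /(uniqX _ _ sX tX).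
  have -> : (s^-1 * t \in H * K)%g.
    have sH : s \in (H <*> K)%g by rewrite -eHK; exact: (subsetP sXHK).
    have tH : t \in (H <*> K)%g by rewrite -eHK; exact: (subsetP sXHK).
    by rewrite eHK groupM ?groupV.
  by rewrite mulr0 sub0r.
have Et : forall t, t \in S -> (J%:Z * c t - \sum_(s in S) c s = 0)%R.
  move=> t tS.
  have := hc t (subsetP sHKG _ (subsetP sXHK _ (subsetP sSX _ tS))).
  rewrite /ltrans.
  rewrite (eq_bigr (fun s => c s * (J%:Z * (s == t)%:Z) - c s)%R); last first.
    by move=> s sS; rewrite lamE // mulrBr mulr1.
  rewrite big_split /= sumrN (bigD1 t) //= eqxx big1 ?addr0.
    by rewrite mulr1 mulrC.
  by move=> s /andP[_ /negPf ->]; rewrite !mulr0.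
have Sum0 : (\sum_(s in S) c s = 0)%R.
  have h : (\sum_(t in S) (J%:Z * c t - \sum_(s in S) c s) = 0)%R by apply: big1.
  move: h; rewrite sumrB -mulr_sumr sumr_const cardS -mulr_natr natrB //.
  set T := (\sum_(s in S) c s)%R; move=> h; rewrite -h -natz; ring.
move=> t tS; have := Et t tS; rewrite Sum0 subr0 => /eqP.
rewrite mulf_eq0 => /orP[|/eqP //].
by rewrite eqz_nat eqn0Ngt J0.
Qed.
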